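(* Let $s\ge r\ge2$, let $Q$ be an $s$-vertex $r$-graph and let $\mathcal P$ be a $Q$-flat hereditary property of $r$-graphs. Then for every $p\ge1$ and every $H\in\mathcal P$ with at least $s$ vertices, $$\lambda^{(p)}(Q,H)\le\pi(Q,\mathcal P)^{1/p}\big(s!\,\mathcal N(Q,H)\big)^{1-1/p}.$$
   Context: An $r$-graph ($r\ge 2$) is a finite hypergraph all of whose edges have exactly $r$ vertices. For $I\subseteq V(H)$, $H[I]$ denotes the induced subhypergraph on $I$. For an $s$-vertex $r$-graph $Q$ and an $r$-graph $H$, $\mathcal N(Q,H)$ is the number of (not necessarily induced) subgraphs of $H$ isomorphic to $Q$. For an $n$-vertex $r$-graph $H$ with vertex set $[n]$ and $\mathbf x\in\mathbb R^n$, $P_{Q,H}(\mathbf x)=s!\sum_{\{i_1,\dots,i_s\}\in\binom{[n]}{s}}\mathcal N(Q,H[\{i_1,\dots,i_s\}])\,x_{i_1}\cdots x_{i_s}$, and for $p\ge1$, $\lambda^{(p)}(Q,H)=\max_{\|\mathbf x\|_p=1}P_{Q,H}(\mathbf x)$. A hereditary property $\mathcal P$ of $r$-graphs is a family of $r$-graphs closed under isomorphism and under taking induced subgraphs; as a standing assumption, whenever $H\in\mathcal P$, the disjoint union of $H$ with an isolated vertex is also in $\mathcal P$. $\mathcal P_n$ is the set of members of $\mathcal P$ with $n$ vertices. $ex(Q,\mathcal P_n)=\max\{\mathcal N(Q,H):H\in\mathcal P_n\}$ and $\pi(Q,\mathcal P)=\lim_{n\to\infty}ex(Q,\mathcal P_n)/\binom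 ns$ (this limit exists). $\lambda^{(p)}(Q,\mathcal P_n)=\max\{\lambda^{(p)}(Q,H):H\in\mathcal P_n\}$ and $\lambda^{(p)}(Q,\mathcal P)=\lim_{n\to\infty}\lambda^{(p)}(Q,\mathcal P_n)n^{s/p-s}$ (this limit exists). $\mathcal P$ is $Q$-flat if $\lambda^{(1)}(Q,\mathcal P)=\pi(Q,\mathcal P)$. *)

(* Defs.v *)
From HB Require Import structures.
From mathcomp Require Import all_boot all_order all_algebra.
From mathcomp Require Import all_classical all_reals all_analysis.
Set Implicit Arguments. Unset Strict Implicit. Unset Printing Implicit Defensive.
Import Order.TTheory GRing.Theory Num.Theory numFieldNormedType.Exports.
Local Open Scope ring_scope.

(* An r-graph on vertex set [n] = 'I_n is given by its edge set. *)
Definition uniform (r n : nat) (E : {set {set 'I_n}}) : Prop :=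
  forall e, e \in E -> #|e| = r.

(* The induced subgraph on the image of an injection f : [m] -> [n],
   relabelled onto [m]. *)
Definition pullback (m n : nat) (f : 'I_m -> 'I_n) (E : {set {set 'I_n}})
  : {set {set 'I_m}} := [set e : {set 'I_m} | f @: e \in E].

(* Disjoint union with an isolated vertex (the new vertex is n). *)
Definition add_isolated (n : nat) (E : {set {set 'I_n}}) : {set {set 'I_n.+1}} :=
  [set (widen_ord (leqnSn n)) @: (e : {set 'I_n}) | e in E].

Definition property := forall n : nat, {set {set 'I_n}} -> Prop.

(* Hereditary property of r-graphs (closed under isomorphism and induced
   subgraphs, both captured by pullbacks along injections), containing only
   r-graphs, and closed under adding an isolated vertex (standing assumption). *)
Definition hereditary (r : nat) (P : property) : Prop :=
  [/\ forall n E, P n E -> uniform r E,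
      forall m n (f : 'I_m -> 'I_n) E, injective f -> P n E -> P m (pullback f E)
    & forall n E, P n E -> P n.+1 (add_isolated E)].

Definition induced (n : nat) (E : {set {set 'I_n}}) (I : {set 'I_n}) :=
  [set e in E | e \subset I].

(* Number of (not necessarily induced) subgraphs (V', E') of the hypergraph
   with vertex set I and edge set E that are isomorphic to Q = ([s], EQ). *)
Definition Ncount (s : nat) (EQ : {set {set 'I_s}}) (n : nat)
  (I : {set 'I_n}) (E : {set {set 'I_n}}) : nat :=
  #|[set x : {set 'I_n} * {set {set 'I_n}} |
      [&& x.1 \subset I, x.2 \subset E &
       [exists f : {ffun 'I_s -> 'I_n},
          [&& injectiveb f, f @: setT == x.1 & [set f @: (e : {set 'I_s}) | e in EQ] == x.2]]]]|.

Definition NQ (s : nat) (EQ : {set {set 'I_s}}) (n : nat) (E : {set {set 'I_n}}) :=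
  Ncount EQ [set: 'I_n]%SET E.

Local Open Scope classical_set_scope.

Definition PQH {R : realType} (s : nat) (EQ : {set {set 'I_s}}) (n : nat)
  (E : {set {set 'I_n}}) (x : 'I_n -> R) : R :=
  (s`!)%:R * \sum_(I : {set 'I_n} | #|I| == s)
               (Ncount EQ I (induced E I))%:R * \prod_(i in I) x i.

Definition pnorm {R : realType} (n : nat) (p : R) (x : 'I_n -> R) : R :=
  (\sum_(i < n) `|x i| `^ p) `^ p^-1.

Definition lamH {R : realType} (s : nat) (EQ : {set {set 'I_s}}) (p : R)
  (n : nat) (E : {set {set 'I_n}}) : R :=
  sup [set PQH EQ E x | x in [set x : 'I_n -> R | pnorm p x = 1]].

Definition exQ {R : realType} (s : nat) (EQ : {set {set 'I_s}}) (P : property)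
  (n : nat) : R :=
  sup [set ((NQ EQ E)%:R : R) | E in [set E | P n E]].

Definition piQ {R : realType} (s : nat) (EQ : {set {set 'I_s}}) (P : property) : R :=
  limn (fun n : nat => exQ (R:=R) EQ P n / ('C(n, s))%:R).

Definition lamPn {R : realType} (s : nat) (EQ : {set {set 'I_s}}) (P : property)
  (p : R) (n : nat) : R :=
  sup [set lamH EQ p E | E in [set E | P n E]].

Definition lamP {R : realType} (s : nat) (EQ : {set {set 'I_s}}) (P : property)
  (p : R) : R :=
  limn (fun n : nat => lamPn EQ P p n * (n%:R) `^ (s%:R / p - s%:R)).

Definition flat {R : realType} (s : nat) (EQ : {set {set 'I_s}}) (P : property) : Prop :=
  lamP (R:=R) EQ P 1 = piQ (R:=R) EQ P.

(* Main.v *)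
Require Import Defs.
From HB Require Import structures.
From mathcomp Require Import all_boot all_order all_algebra.
From mathcomp Require Import all_classical all_reals all_analysis.
From mathcomp Require Import ring lra.
Import Defs.
Set Implicit Arguments. Unset Strict Implicit. Unset Printing Implicit Defensive.
Import Order.TTheory GRing.Theory Num.Theory numFieldNormedType.Exports.


Definition Aset (s : nat) (EQ : {set {set 'I_s}}) (n : nat)
  (I : {set 'I_n}) (E : {set {set 'I_n}}) :=
  [set x : {set 'I_n} * {set {set 'I_n}} |
      [&& x.1 \subset I, x.2 \subset E &
       [exists f : {ffun 'I_s -> 'I_n},
          [&& injectiveb f, f @: setT == x.1 & [set f @: (e : {set 'I_s}) | e in EQ] == x.2]]]].

Lemma NcountE s EQ n I E : @Ncount s EQ n I E = #|Aset EQ I E|.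
Proof. by []. Qed.

Lemma card_img_inj s n (f : {ffun 'I_s -> 'I_n}) : injectiveb f -> #|f @: setT| = s.
Proof. move/injectiveP=> fi; rewrite card_imset // -[RHS](card_ord s); apply: eq_card => x; by rewrite in_setT inE. Qed.

Lemma A_card s (EQ : {set {set 'I_s}}) n (I : {set 'I_n}) (E : {set {set 'I_n}}) x : x \in Aset EQ I E -> #|x.1| = s.
Proof.
rewrite inE => /and3P[_ _ /existsP[f /and3P[fi /eqP fx _]]].
by rewrite -fx card_img_inj.
Qed.

Lemma A_fst s (EQ : {set {set 'I_s}}) n (I : {set 'I_n}) (E : {set {set 'I_n}}) x : #|I| = s -> x \in Aset EQ I E -> x.1 = I.
Proof.
move=> cI; rewrite inE => /and3P[sI _ /existsP[f /and3P[fi /eqP fx _]]].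
apply/eqP; rewrite eqEcard sI cI -fx card_img_inj // leqnn. exact: isT. Qed.

Lemma sum_Ncount_le s (EQ : {set {set 'I_s}}) n (E : {set {set 'I_n}}) :
  (\sum_(I : {set 'I_n} | #|I| == s) Ncount EQ I (induced E I) <= NQ EQ E)%N.
Proof.
rewrite /NQ NcountE.
set AT := Aset EQ [set: 'I_n]%SET E.
apply: (@leq_trans (\sum_(I : {set 'I_n} | #|I| == s) \sum_(x in AT) (x.1 == I))).
  apply: leq_sum => I /eqP cI; rewrite NcountE.
  have -> : (\sum_(x in AT) (x.1 == I) = #|[set x in AT | x.1 == I]|)%N.
    rewrite -sum1_card [RHS]big_mkcond /= [LHS]big_mkcond /=.
    apply: eq_bigr => x _; rewrite [x \in [set _ in _ | _]]inE; by case: (x \in AT); case: (x.1 == I).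
  apply: subset_leq_card. apply/fintype.subsetP => x xA.
  have x1 := A_fst cI xA; move: xA; rewrite !inE x1 eqxx andbT => /and3P[_ x2 ->]; rewrite finset.subsetT andbT.
  apply: (fintype.subset_trans x2); apply/fintype.subsetP => e; rewrite inE => /andP[] //.
rewrite exchange_big /= -sum1_card; apply: leq_sum => x xA.
rewrite (bigD1 x.1) /= ?eqxx ?(A_card xA) //.
rewrite big1 // => i /andP[_ /negbTE]; rewrite eq_sym => ->.
by [].
Qed.

Definition Bset s n (I : {set 'I_n}) :=
  [set f : {ffun 'I_s -> 'I_n} | injectiveb f && (f @: setT == I)].

Lemma Ncount_le_B s (EQ : {set {set 'I_s}}) n (I : {set 'I_n}) (F : {set {set 'I_n}}) :
  #|I| = s -> (Ncount EQ I F <= #|Bset s I|)%N.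
Proof.
move=> cI; rewrite NcountE.
pose h := fun f : {ffun 'I_s -> 'I_n} => (f @: setT, [set f @: (e : {set 'I_s}) | e in EQ]).
apply: (leq_trans _ (leq_imset_card h _)); apply: subset_leq_card.
apply/fintype.subsetP => x xA.
have x1 := A_fst cI xA.
move: xA; rewrite inE => /and3P[_ _ /existsP[f /and3P[fi /eqP fx /eqP fe]]].
apply/imsetP; exists f; first by rewrite inE fi fx x1 eqxx.
by rewrite /h fx fe; case: x x1 {fx fe}.
Qed.

Section Sums.
Variable R : realType.
Local Open Scope ring_scope.

Lemma sumB s n (I : {set 'I_n}) (y : 'I_n -> R) :
  \sum_(f in Bset s I) \prod_(k < s) y (f k) = (#|Bset s I|)%:R * \prod_(i in I) y i.
Proof.
rewrite mulr_natl -sumr_const; apply: eq_bigr => f.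
rewrite inE => /andP[/injectiveP fi /eqP <-].
rewrite big_imset /=; last by move=> a b _ _; apply: fi.
by apply: eq_bigl => k; rewrite in_setT.
Qed.
Lemma sum_sumB s n (F : {ffun 'I_s -> 'I_n} -> R) : (forall f, 0 <= F f) ->
  \sum_(I : {set 'I_n} | #|I| == s) \sum_(f in Bset s I) F f <= \sum_f F f.
Proof.
move=> F0.
under eq_bigr => I _ do rewrite big_mkcond /=.
rewrite exchange_big /=; apply: ler_sum => f _.
have [fi|nfi] := boolP (injectiveb f).
  rewrite (bigD1 (f @: setT)) /=; last by rewrite card_img_inj.
  rewrite inE fi eqxx /= big1 ?addr0 // => I /andP[_ nI].
  by rewrite inE fi /= eq_sym (negbTE nI).
by rewrite big1 // => I _; rewrite inE (negbTE nfi).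
Qed.

Lemma sum_all_f s n (y : 'I_n -> R) :
  \sum_(f : {ffun 'I_s -> 'I_n}) \prod_(k < s) y (f k) = (\sum_i y i) ^+ s.
Proof.
by rewrite -(bigA_distr_bigA (fun (_ : 'I_s) (j : 'I_n) => y j)) /= prodr_const card_ord.
Qed.

Lemma sum_Ncount_prod s (EQ : {set {set 'I_s}}) n (E : {set {set 'I_n}}) (y : 'I_n -> R) :
  (forall i, 0 <= y i) ->
  \sum_(I : {set 'I_n} | #|I| == s) (Ncount EQ I (induced E I))%:R * \prod_(i in I) y i
    <= (\sum_i y i) ^+ s.
Proof.
move=> y0; rewrite -sum_all_f.
have H := @sum_sumB s n (fun f : {ffun 'I_s -> 'I_n} => \prod_(k < s) y (f k))
  (fun f => ltac:(by apply: prodr_ge0)).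
apply: le_trans H.
apply: ler_sum => I /eqP cI; rewrite sumB.
by apply: ler_wpM2r; [apply: prodr_ge0 | rewrite ler_nat Ncount_le_B].
Qed.

End Sums.

Lemma Ncount_img s (EQ : {set {set 'I_s}}) n m (g : 'I_n -> 'I_m) (E : {set {set 'I_n}})
  (J : {set 'I_n}) : injective g ->
  (Ncount EQ J (induced E J) <=
   Ncount EQ (g @: J) (induced [set g @: (e : {set 'I_n}) | e in E] (g @: J)))%N.
Proof.
move=> gi; rewrite !NcountE.
pose h := fun x : {set 'I_n} * {set {set 'I_n}} =>
  (g @: x.1, [set g @: (e : {set 'I_n}) | e in x.2]).
have hi : injective h.
  move=> [a1 a2] [b1 b2] /= [] /(imset_inj gi) -> /(imset_inj (imset_inj gi)) -> //.
rewrite -(card_imset _ hi); apply: subset_leq_card.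
apply/fintype.subsetP => _ /imsetP[x xA ->].
move: xA; rewrite !inE => /and3P[x1 x2 /existsP[f /and3P[fi /eqP fx /eqP fe]]].
apply/and3P; split.
- exact: imsetS.
- apply/fintype.subsetP => _ /imsetP[e ex ->].
  move/fintype.subsetP: x2 => /(_ e ex); rewrite !inE => /andP[eE eJ].
  by rewrite imset_f // imsetS.
apply/existsP; exists [ffun k => g (f k)].
apply/and3P; split.
- apply/injectiveP => a b; rewrite !ffunE => /gi; exact: (injectiveP _ fi).
- rewrite /= -fx -imset_comp; apply/eqP; apply: eq_imset => k /=; by rewrite ffunE.
rewrite /= -fe -imset_comp; apply/eqP; apply: eq_imset => e /=.
rewrite -imset_comp; apply: eq_imset => k /=; by rewrite ffunE.
Qed.

Section AnaOuter.
Local Open Scope ring_scope.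
Local Open Scope ring_scope.

Section Ana.
Variable R : realType.
Variable s : nat.
Variable EQ : {set {set 'I_s}}.

Lemma PQH_abs n (E : {set {set 'I_n}}) (x : 'I_n -> R) :
  PQH EQ E x <= PQH EQ E (fun i => `|x i|).
Proof.
rewrite /PQH; apply: ler_wpM2l => //; apply: ler_sum => I _.
apply: ler_wpM2l => //; rewrite -normr_prod; exact: ler_norm.
Qed.

Definition ext n (x : 'I_n -> R) (i : 'I_n.+1) : R :=
  if [pick j | widen_ord (leqnSn n) j == i] is Some j then `|x j| else 0.

Lemma ext_w n (x : 'I_n -> R) j : ext x (widen_ord (leqnSn n) j) = `|x j|.
Proof.
rewrite /ext; case: pickP => [j' /eqP /(congr1 val) /= /val_inj -> //|].
by move=> /(_ j); rewrite eqxx.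
Qed.

Lemma ext_max n (x : 'I_n -> R) : ext x ord_max = 0.
Proof.
rewrite /ext; case: pickP => [j' /eqP /(congr1 val) /= jn|//].
by move: (ltn_ord j'); rewrite jn ltnn.
Qed.


Lemma ext_ge0 n (x : 'I_n -> R) (i : 'I_n.+1) : 0 <= ext x i.
Proof. rewrite /ext; case: [pick j | widen_ord (leqnSn n) j == i] => [j|] //; exact: normr_ge0. Qed.

Lemma widen_inj n : injective (widen_ord (leqnSn n)).
Proof. by move=> a b /(congr1 val) /= /val_inj. Qed.

Lemma PQH_ext n (E : {set {set 'I_n}}) (x : 'I_n -> R) :
  PQH EQ E x <= PQH EQ (add_isolated E) (ext x).
Proof.
apply: le_trans (PQH_abs _ _) _.
rewrite /PQH; apply: ler_wpM2l => //.
set w := widen_ord (leqnSn n).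
set b := fun I : {set 'I_n.+1} =>
  (Ncount EQ I (induced (add_isolated E) I))%:R * \prod_(i in I) ext x i.
have b0 : forall I, 0 <= b I by move=> I; rewrite /b mulr_ge0 // prodr_ge0 // => i _; apply: ext_ge0.
apply: (@le_trans _ _ (\sum_(J : {set 'I_n} | #|J| == s) b (w @: J))).
  apply: ler_sum => J _; rewrite /b.
  apply: ler_pM => //; first by apply: prodr_ge0.
    by rewrite ler_nat /add_isolated; apply: Ncount_img; apply: widen_inj.
  rewrite big_imset /=; last by move=> a c _ _; apply: widen_inj.
  have -> : \prod_(i in J) ext x (w i) = \prod_(i in J) `|x i| by apply: eq_bigr => j _; rewrite ext_w.
  by [].
set S := [set w @: (J : {set 'I_n}) | J in [set J : {set 'I_n} | #|J| == s]].
have -> : \sum_(J : {set 'I_n} | #|J| == s) b (w @: J) = \sum_(I in S) b I.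
  rewrite big_imset /=; last by move=> a c _ _; apply: imset_inj; apply: widen_inj.
  by apply: eq_bigl => J; rewrite inE.
rewrite [leLHS]big_mkcond [leRHS]big_mkcond /=; apply: ler_sum => I _.
case: ifP => IS; last by case: ifP => _ //; apply: b0.
case/imsetP: IS => J JS ->; move: JS; rewrite inE => /eqP cJ.
rewrite card_imset ?cJ ?eqxx //; last by apply: widen_inj.
Qed.


Lemma pnorm1 n (x : 'I_n -> R) : pnorm 1 x = \sum_i `|x i|.
Proof.
rewrite /pnorm invr1 powRr1; last by apply: sumr_ge0 => i _; apply: powR_ge0.
by apply: eq_bigr => i _; rewrite powRr1.
Qed.

Lemma sup_le_gen (S : set R) b : 0 <= b -> (forall y, S y -> y <= b) -> sup S <= b.
Proof.
move=> b0 Sb; have [->|ne] := eqVneq S set0; first by rewrite sup0.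
by apply: ge_sup => //; apply/set0P.
Qed.

Lemma sup_ge (S : set R) b y : (forall z, S z -> z <= b) -> S y -> y <= sup S.
Proof. by move=> Sb Sy; apply: ub_le_sup => //; exists b => z /Sb. Qed.

Lemma PQH_bound n (E : {set {set 'I_n}}) (x : 'I_n -> R) :
  pnorm 1 x = 1 -> PQH EQ E x <= (s`!)%:R.
Proof.
rewrite pnorm1 => x1; apply: le_trans (PQH_abs _ _) _.
rewrite /PQH -[leRHS]mulr1; apply: ler_wpM2l => //.
have := @sum_Ncount_prod R s EQ n E (fun i => `|x i|) (fun i => normr_ge0 (x i)); by rewrite x1 expr1n.
Qed.

Lemma lamH1_le n (E : {set {set 'I_n}}) : lamH (R:=R) EQ 1 E <= (s`!)%:R.
Proof.
by apply: sup_le_gen => // _ [x /= x1 <-]; apply: PQH_bound.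
Qed.

Lemma lamH1_ub n (E : {set {set 'I_n}}) (x : 'I_n -> R) :
  pnorm 1 x = 1 -> PQH EQ E x <= lamH (R:=R) EQ 1 E.
Proof.
move=> x1; apply: (@sup_ge _ (s`!)%:R); last by exists x.
by move=> _ [y /= y1 <-]; apply: PQH_bound.
Qed.

Lemma delta_norm n (i0 : 'I_n) (p : R) : 0 < p ->
  pnorm p (fun i => (i == i0)%:R : R) = 1.
Proof.
move=> p0; rewrite /pnorm (bigD1 i0) //= eqxx normr1 powR1 big1 ?addr0 ?powR1 //.
by move=> i /negbTE ->; rewrite normr0 powR0 // gt_eqF.
Qed.

Lemma lamH_ne n (E : {set {set 'I_n}}) (p : R) : (0 < n)%N -> 0 < p ->
  ([set PQH EQ E x | x in [set x : 'I_n -> R | pnorm p x = 1]] !=set0)%classic.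
Proof.
move=> n0 p0; exists (PQH EQ E (fun i => (i == Ordinal n0)%:R)).
by exists (fun i => (i == Ordinal n0)%:R) => //=; apply: delta_norm.
Qed.

Lemma lamH1_mono n (E : {set {set 'I_n}}) : (0 < n)%N ->
  lamH (R:=R) EQ 1 E <= lamH (R:=R) EQ 1 (add_isolated E).
Proof.
move=> n0; apply: ge_sup; first exact: lamH_ne.
move=> _ [x /= x1 <-]; apply: le_trans (PQH_ext _ _) _; apply: lamH1_ub.
move: x1; rewrite !pnorm1 big_ord_recr /= ext_max normr0 addr0 => <-.
by apply: eq_bigr => i _; rewrite ext_w normr_id.
Qed.


Section Lim.
Local Open Scope classical_set_scope.
Unset Implicit Arguments.
Variable P : property.

Lemma lamPn_le n : lamPn (R:=R) EQ P 1 n <= (s`!)%:R.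
Proof. by apply: sup_le_gen => // _ [E _ <-]; apply: lamH1_le. Qed.

Lemma lamH1_le_lamPn n (E : {set {set 'I_n}}) : P n E ->
  lamH (R:=R) EQ 1 E <= lamPn (R:=R) EQ P 1 n.
Proof.
move=> PE; apply: (@sup_ge _ (s`!)%:R); last by exists E.
by move=> _ [F _ <-]; apply: lamH1_le.
Qed.

Lemma lamPn_mono n : (forall n E, P n E -> P n.+1 (add_isolated E)) ->
  (0 < n)%N -> (exists E, P n E) ->
  lamPn (R:=R) EQ P 1 n <= lamPn (R:=R) EQ P 1 n.+1.
Proof.
move=> hadd n0 [E PE]; apply: ge_sup; first by exists (lamH (R:=R) EQ 1 E); exists E.
move=> _ [F PF <-]; apply: le_trans (lamH1_mono _ n0) _.
by apply: lamH1_le_lamPn; apply: hadd.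
Qed.

Lemma lamH1_le_piQ : (forall n E, P n E -> P n.+1 (add_isolated E)) ->
  flat (R:=R) EQ P -> forall n (E : {set {set 'I_n}}), P n E -> (0 < n)%N ->
  lamH (R:=R) EQ 1 E <= piQ (R:=R) EQ P.
Proof.
move=> hadd fl n0 E PE n0pos; rewrite -fl /lamP.
have -> : (fun n : nat => lamPn (R:=R) EQ P 1 n * n%:R `^ (s%:R / 1 - s%:R))
    = lamPn (R:=R) EQ P 1.
  by apply: funext => n; rewrite divr1 subrr powRr0 mulr1.
set v := fun k => lamPn (R:=R) EQ P 1 (k + n0).
have Pv : forall k, exists E, P (k + n0)%N E.
  by elim => [|k [E' HE']]; [exists E | exists (add_isolated E'); apply: hadd].
have vnd : nondecreasing_seq v.
  apply/nondecreasing_seqP => k; rewrite /v addSn; apply: lamPn_mono => //.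
  by rewrite addn_gt0 n0pos orbT.
have vub : has_ubound (range v).
  by exists (s`!)%:R => _ [k _ <-]; apply: lamPn_le.
have cv : lamPn (R:=R) EQ P 1 @ \oo --> sup (range v).
  by rewrite -(cvg_shiftn n0); apply: nondecreasing_cvgn.
rewrite (cvg_lim _ cv); last exact: norm_hausdorff.
apply: le_trans (@lamH1_le_lamPn n0 E PE) _.
have : v 0%N <= sup (range v) by apply: ub_le_sup => //; exists 0%N.
by rewrite /v add0n.
Qed.

End Lim.

End Ana.

Local Open Scope ring_scope.

Section Hol.
Variable R : realType.

Lemma young1 (t p : R) : 0 <= t -> 1 <= p -> t `^ p^-1 <= p^-1 * t + (1 - p^-1).
Proof.
move=> t0; rewrite le_eqVlt => /predU1P[<-|p1].
  by rewrite invr1 powRr1 // mul1r subrr addr0.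
have p0 : 0 < p by apply: lt_trans p1.
have ip1 : p^-1 < 1 by rewrite invf_lt1.
have q0 : 0 < 1 - p^-1 by rewrite subr_gt0.
have := @conjugate_powR R (t `^ p^-1) 1 p (1 - p^-1)^-1 (powR_ge0 _ _) ler01 p0.
rewrite invr_gt0 q0 invrK addrC subrK => /(_ isT erefl).
by rewrite mulr1 -powRrM mulVf ?gt_eqF // powRr1 // powR1 mul1r mulrC.
Qed.

Lemma powR_prod (I : Type) (r : seq I) (Pd : pred I) (f : I -> R) (q : R) :
  (forall i, 0 <= f i) ->
  \prod_(i <- r | Pd i) f i `^ q = (\prod_(i <- r | Pd i) f i) `^ q.
Proof.
move=> f0.
apply: (@proj1 _ (0 <= \prod_(i <- r | Pd i) f i)).
apply: (big_rec2 (fun a b => a = b `^ q /\ 0 <= b)).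
  by rewrite powR1.
move=> i a b _ [-> b0]; split; last by apply: mulr_ge0.
by rewrite powRM.
Qed.


Lemma holder_sum (I : finType) (Pd : pred I) (c w : I -> R) (p : R) :
  1 <= p -> (forall i, 0 <= c i) -> (forall i, 0 <= w i) ->
  \sum_(i | Pd i) c i * w i `^ p^-1 <=
  (\sum_(i | Pd i) c i * w i) `^ p^-1 * (\sum_(i | Pd i) c i) `^ (1 - p^-1).
Proof.
move=> p1 c0 w0.
have p0 : 0 < p by apply: lt_le_trans ltr01 p1.
have q0 : 0 < p^-1 by rewrite invr_gt0.
set q := p^-1.
set A := \sum_(i | Pd i) c i * w i.
set C := \sum_(i | Pd i) c i.
have A0 : 0 <= A by apply: sumr_ge0 => i _; apply: mulr_ge0.
have C0 : 0 <= C by apply: sumr_ge0.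
move: C0; rewrite le_eqVlt => /predU1P[C0e|Cp].
  rewrite big1 ?mulr_ge0 ?powR_ge0 // => i Pi.
  by rewrite (psumr_eq0P _ (esym C0e)) ?mul0r.
move: A0; rewrite le_eqVlt => /predU1P[A0e|Ap].
  rewrite big1 ?mulr_ge0 ?powR_ge0 // => i Pi.
  have := psumr_eq0P (fun i _ => mulr_ge0 (c0 i) (w0 i)) (esym A0e) Pi.
  by move/eqP; rewrite mulf_eq0 => /orP[/eqP->|/eqP->]; rewrite ?mul0r // powR0 ?mulr0 // gt_eqF.
set K' := (A / C) `^ q.
have K'0 : 0 <= K' by apply: powR_ge0.
have KE : A `^ q * C `^ (1 - q) = K' * C.
  rewrite /K' powRM ?invr_ge0 ?ltW // -powR_inv1 ?ltW // -powRrM mulN1r.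
  rewrite powRD; last by apply/implyP => _; rewrite gt_eqF.
  by rewrite powRr1 ?ltW // [C * _]mulrC mulrA.
apply: (@le_trans _ _ (\sum_(i | Pd i) K' * C * (q / A * (c i * w i) + (1 - q) / C * c i))).
  apply: ler_sum => i _.
  have t0 : 0 <= w i * C / A by apply: divr_ge0; [apply: mulr_ge0 => //; apply: ltW | apply: ltW].
  have wE : w i = A / C * (w i * C / A) by field; rewrite !gt_eqF.
  rewrite [X in X `^ q]wE (@powRM R (A / C) _ q (divr_ge0 (ltW Ap) (ltW Cp)) t0) -/K'.
  have -> : K' * C * (q / A * (c i * w i) + (1 - q) / C * c i) =
            c i * K' * (q * (w i * C / A) + (1 - q)) by field; rewrite !gt_eqF.
  rewrite mulrA; apply: ler_wpM2l; first by rewrite mulr_ge0.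
  by apply: young1.
rewrite -mulr_sumr big_split /= -!mulr_sumr -/A -/C.
rewrite KE.
have -> : q / A * A + (1 - q) / C * C = 1 by field; rewrite !gt_eqF.
by rewrite mulr1.
Qed.

End Hol.

End AnaOuter.

Unset Implicit Arguments.
Local Open Scope ring_scope.

Theorem lemma3p13 (R : realType) (r s : nat) (EQ : {set {set 'I_s}})
  (P : property) :
  (2 <= r)%N -> (r <= s)%N -> uniform r EQ ->
  hereditary r P -> flat (R:=R) EQ P ->
  forall (p : R), 1 <= p ->
  forall (n : nat) (E : {set {set 'I_n}}), P n E -> (s <= n)%N ->
  lamH EQ p E <=
    (piQ (R:=R) EQ P) `^ p^-1 * ((s`! * NQ EQ E)%:R) `^ (1 - p^-1).
Proof.
move=> r2 rs uQ [hunif hpull hadd] fl p p1 n E PE sn.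
have n0 : (0 < n)%N by apply: leq_trans sn; apply: leq_trans rs; apply: leq_trans r2.
have p0 : 0 < p by apply: lt_le_trans ltr01 p1.
have pn0 : p != 0 by rewrite gt_eqF.
have lam1 := @lamH1_le_piQ R s EQ P hadd fl n E PE n0.
apply: ge_sup; first exact: lamH_ne.
move=> _ [x /= xn <-].
pose y := fun i => `|x i| `^ p.
have y0 : forall i, 0 <= y i by move=> i; apply: powR_ge0.
have Sy : \sum_i y i = 1.
  have S0 : 0 <= \sum_i y i by apply: sumr_ge0.
  have -> : \sum_i y i = ((\sum_i y i) `^ p^-1) `^ p by rewrite -powRrM mulVf // powRr1.
  by move: xn; rewrite /pnorm => ->; rewrite powR1.
have xy : forall i, `|x i| = y i `^ p^-1.
  by move=> i; rewrite /y -powRrM mulfV // powRr1.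
apply: le_trans (PQH_abs EQ E x) _.
have PQHy : PQH EQ E y <= lamH (R:=R) EQ 1 E.
  apply: lamH1_ub; rewrite pnorm1 -Sy; apply: eq_bigr => i _; rewrite ger0_norm //.
pose c := fun I : {set 'I_n} => (s`!)%:R * (Ncount EQ I (induced E I))%:R : R.
pose w := fun I : {set 'I_n} => \prod_(i in I) y i.
have c0 : forall I, 0 <= c I by move=> I; apply: mulr_ge0.
have w0 : forall I, 0 <= w I by move=> I; apply: prodr_ge0.
have E1 : PQH EQ E (fun i => `|x i|) =
          \sum_(I : {set 'I_n} | #|I| == s) c I * w I `^ p^-1.
  rewrite /PQH mulr_sumr; apply: eq_bigr => I _; rewrite mulrA /w powR_prod //.
  by rewrite -powRrM mulfV // powRr1 //; apply: prodr_ge0 => i _; exact: normr_ge0.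
have E2 : PQH EQ E y = \sum_(I : {set 'I_n} | #|I| == s) c I * w I.
  by rewrite /PQH mulr_sumr; apply: eq_bigr => I _; rewrite mulrA.
have E3 : \sum_(I : {set 'I_n} | #|I| == s) c I <= ((s`! * NQ EQ E)%:R : R).
  rewrite -mulr_sumr natrM; apply: ler_wpM2l => //.
  by rewrite -natr_sum ler_nat; apply: sum_Ncount_le.
rewrite E1; apply: le_trans (@holder_sum R _ (fun I : {set 'I_n} => #|I| == s) c w p p1 c0 w0) _.
have A0 : 0 <= \sum_(I : {set 'I_n} | #|I| == s) c I * w I by apply: sumr_ge0 => I _; apply: mulr_ge0.
have C0 : 0 <= \sum_(I : {set 'I_n} | #|I| == s) c I by apply: sumr_ge0.
have q0 : 0 <= p^-1 by rewrite invr_ge0 ltW.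
have q1 : 0 <= 1 - p^-1 by rewrite subr_ge0 invf_le1.
apply: ler_pM; try apply: powR_ge0.
  apply: ge0_ler_powR; rewrite ?nnegrE //.
    by apply: le_trans A0 _; rewrite -E2; apply: le_trans PQHy lam1.
  by rewrite -E2; apply: le_trans PQHy lam1.
apply: ge0_ler_powR; rewrite ?nnegrE //.
Qed.
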